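(* Let $\Lambda$ be a locally finite $k$-graph with no sources or sinks, and let $\alpha$ be an action of $\mathbb{Z}^l$ on $\Lambda$ by automorphisms. Then $\Lambda$ is $\alpha$-cofinal if and only if $\tau^{\sigma,\alpha}$ is irreducible.
   Context: A $k$-graph is a countable category $\Lambda$ with a functor $d:\Lambda\to\mathbb{N}^k$ with unique factorisation; vertices are degree-$0$ morphisms; $v\Lambda w=\{\lambda:r(\lambda)=v,s(\lambda)=w\}$. Locally finite with no sources or sinks: for each $p$ and vertex $v$, $v\Lambda^p$ and $\Lambda^pv$ are finite and nonempty. An automorphism is a bijective degree-preserving functor. $\Lambda^\infty$ is the set of degree-preserving functors $x:\Omega_k\to\Lambda$ ($\Omega_k=\{(a,b)\in\mathbb{N}^k\times\mathbb{N}^k:a\le b\}$, $r(a,b)=(a,a)$, $s(a,b)=(b,b)$, $(a,b)(b,c)=(a,c)$, $d(a,b)=b-a$), topologised by cylinder sets $\lambda\Lambda^\infty=\{x:x(0,d(\lambda))=\lambda\}$; $x(p):=x(p,p)$; $\sigma^p(x)(0,n)=x(p,p+n)$; $\phi^\infty(x)(0,n)=\phi(x(0,n))$. $\tau^{\sigma,\alpha}_{(p,m)}=\sigma^p\circ\alpha^\infty_{-m}$, an action of $\mathbb{N}^k\times\mathbb{N}^l$ on $\Lambda^\infty$. Points $x,y$ are trajectory equivalent if $\tau^{\sigma,\alpha}_s(x)=\tau^{\sigma,\alpha}_t(y)$ for some $s,t$; $W$ is invariant if it contains every point trajectory equivalent to one of its points; $\tau^{\sigma,\alpha}$ is irreducible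 if the only open invariant subsets of $\Lambda^\infty$ are $\emptyset$ and $\Lambda^\infty$. $\Lambda$ is $\alpha$-cofinal if for every vertex $v$ and $x\in\Lambda^\infty$ there exist $p\in\mathbb{N}^k$ and $m,n\in\mathbb{N}^l$ with $\alpha_{-m}(v)\Lambda\alpha_{-n}(x(p))\ne\emptyset$. *)

(* Defs.v *)
From mathcomp Require Import all_boot all_order all_algebra.
Set Implicit Arguments. Unset Strict Implicit. Unset Printing Implicit Defensive.
Import GRing.Theory Num.Theory.

Definition NN (k : nat) := {ffun 'I_k -> nat}.
Definition ZZ (l : nat) := {ffun 'I_l -> int}.

Definition nn0 {k} : NN k := [ffun _ => 0%N].
Definition nnadd {k} (m n : NN k) : NN k := [ffun i => (m i + n i)%N].
Definition nnsub {k} (m n : NN k) : NN k := [ffun i => (m i - n i)%N].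
Definition nnle {k} (m n : NN k) : bool := [forall i, m i <= n i].

Definition zz0 {l} : ZZ l := [ffun _ => 0%R].
Definition zzadd {l} (m n : ZZ l) : ZZ l := [ffun i => (m i + n i)%R].
Definition zzneg {l} (m : NN l) : ZZ l := [ffun i => (- (m i)%:Z)%R].

(* A (small, countable) category given by its arrows: objects are identified
   with identity arrows, r/s give the range/source identity, [kcomp l m] is
   the composite l m (meaningful only when s l = r m).  [kd] is the degree. *)
Record kgraph (k : nat) := KGraph {
  kmor :> countType;
  kr : kmor -> kmor;
  ks : kmor -> kmor;
  kcomp : kmor -> kmor -> kmor;
  kd : kmor -> NN k }.

Definition is_kgraph k (L : kgraph k) : Prop :=
  (forall l : L, kr (kr l) = kr l /\ ks (kr l) = kr l /\ kr (ks l) = ks l /\ ks (ks l) = ks l)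
  /\ (forall l : L, kcomp (kr l) l = l /\ kcomp l (ks l) = l)
  /\ (forall l m : L, ks l = kr m -> kr (kcomp l m) = kr l /\ ks (kcomp l m) = ks m)
  /\ (forall l m n : L, ks l = kr m -> ks m = kr n ->
        kcomp (kcomp l m) n = kcomp l (kcomp m n))
  /\ (forall l m : L, ks l = kr m -> kd (kcomp l m) = nnadd (kd l) (kd m))
  /\ (forall (l : L) (m n : NN k), kd l = nnadd m n ->
        exists mu nu : L,
          (kd mu = m /\ kd nu = n /\ ks mu = kr nu /\ l = kcomp mu nu)
          /\ forall mu' nu' : L,
               kd mu' = m -> kd nu' = n -> ks mu' = kr nu' -> l = kcomp mu' nu' ->
               mu' = mu /\ nu' = nu).

Definition is_vertex k (L : kgraph k) (v : L) : Prop := kd v = nn0.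

Definition locally_finite_no_sources_sinks k (L : kgraph k) : Prop :=
  forall (p : NN k) (v : L), is_vertex v ->
    (exists s : seq L, forall l : L, kr l = v -> kd l = p -> l \in s)
    /\ (exists s : seq L, forall l : L, ks l = v -> kd l = p -> l \in s)
    /\ (exists l : L, kr l = v /\ kd l = p)
    /\ (exists l : L, ks l = v /\ kd l = p).

Definition kg_aut k (L : kgraph k) (phi : L -> L) : Prop :=
  bijective phi
  /\ (forall l : L, kd (phi l) = kd l /\ kr (phi l) = phi (kr l) /\ ks (phi l) = phi (ks l))
  /\ (forall l m : L, ks l = kr m -> phi (kcomp l m) = kcomp (phi l) (phi m)).

Definition is_aut_action k l (L : kgraph k) (alpha : ZZ l -> L -> L) : Prop :=
  (forall z, kg_aut (alpha z))
  /\ (forall x : L, alpha zz0 x = x)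
  /\ (forall z w (x : L), alpha (zzadd z w) x = alpha z (alpha w x)).

(* x a b stands for x(a,b) on Omega_k = {(a,b) | a <= b}; off Omega_k the
   function is normalised to x a b = x a a so that such functions correspond
   bijectively to degree-preserving functors Omega_k -> Lambda. *)
Definition is_inf_path k (L : kgraph k) (x : NN k -> NN k -> L) : Prop :=
  (forall a b, nnle a b ->
     kd (x a b) = nnsub b a /\ kr (x a b) = x a a /\ ks (x a b) = x b b)
  /\ (forall a b c, nnle a b -> nnle b c -> x a c = kcomp (x a b) (x b c))
  /\ (forall a b, ~~ nnle a b -> x a b = x a a).

Definition in_cyl k (L : kgraph k) (lam : L) (x : NN k -> NN k -> L) : Prop :=
  x nn0 (kd lam) = lam.

(* open sets of the topology generated by the cylinder sets *)
Definition is_open_path_set k (L : kgraph k) (W : (NN k -> NN k -> L) -> Prop) : Prop :=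
  forall x, is_inf_path x -> W x ->
    exists ls : seq L,
      (forall lam, lam \in ls -> in_cyl lam x)
      /\ (forall y, is_inf_path y -> (forall lam, lam \in ls -> in_cyl lam y) -> W y).

Definition shift k (L : kgraph k) (p : NN k) (x : NN k -> NN k -> L) : NN k -> NN k -> L :=
  fun a b => x (nnadd a p) (nnadd b p).
Definition alpha_inf k (L : kgraph k) (phi : L -> L) (x : NN k -> NN k -> L) :
  NN k -> NN k -> L := fun a b => phi (x a b).

Definition tau k l (L : kgraph k) (alpha : ZZ l -> L -> L) (p : NN k) (m : NN l)
  (x : NN k -> NN k -> L) : NN k -> NN k -> L :=
  shift p (alpha_inf (alpha (zzneg m)) x).

Definition traj_equiv k l (L : kgraph k) (alpha : ZZ l -> L -> L)
  (x y : NN k -> NN k -> L) : Prop :=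
  exists (p q : NN k) (m n : NN l), tau alpha p m x = tau alpha q n y.

Definition is_invariant k l (L : kgraph k) (alpha : ZZ l -> L -> L)
  (W : (NN k -> NN k -> L) -> Prop) : Prop :=
  forall x y, is_inf_path x -> is_inf_path y -> W x -> traj_equiv alpha x y -> W y.

Definition tau_irreducible k l (L : kgraph k) (alpha : ZZ l -> L -> L) : Prop :=
  forall W : (NN k -> NN k -> L) -> Prop,
    is_open_path_set W -> is_invariant alpha W ->
    (forall x, is_inf_path x -> ~ W x) \/ (forall x, is_inf_path x -> W x).

Definition alpha_cofinal k l (L : kgraph k) (alpha : ZZ l -> L -> L) : Prop :=
  forall (v : L) (x : NN k -> NN k -> L), is_vertex v -> is_inf_path x ->
    exists (p : NN k) (m n : NN l) (lam : L),
      kr lam = alpha (zzneg m) v /\ ks lam = alpha (zzneg n) (x p p).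

(* Main.v *)
Require Import Defs.
From mathcomp Require Import all_boot all_order all_algebra.
From mathcomp Require Import zify.
From Stdlib Require Import ClassicalEpsilon FunctionalExtensionality Classical.
Set Implicit Arguments. Unset Strict Implicit. Unset Printing Implicit Defensive.
Import GRing.Theory Num.Theory.

Ltac atoms i := repeat match goal with |- context [@fun_of_fin _ _ _ ?m i] => let a := fresh "a" in set a := (m i); clearbody a end.
Ltac nnext := apply/ffunP => i; rewrite /nn0 /nnadd /nnsub ?ffunE.

Definition nnmax k (m n : NN k) : NN k := [ffun i => maxn (m i) (n i)].
Lemma nnleP k (m n : NN k) : reflect (forall i, m i <= n i) (nnle m n).
Proof. exact: forallP. Qed.

Lemma nnaddC k (m n : NN k) : nnadd m n = nnadd n m.
Proof. nnext; atoms i; lia. Qed.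
Lemma nnaddA k (m n p : NN k) : nnadd m (nnadd n p) = nnadd (nnadd m n) p.
Proof. nnext; atoms i; lia. Qed.
Lemma nnadd0 k (m : NN k) : nnadd m nn0 = m.
Proof. nnext; atoms i; lia. Qed.
Lemma nn0add k (m : NN k) : nnadd nn0 m = m.
Proof. nnext; atoms i; lia. Qed.
Lemma nnsub0 k (m : NN k) : nnsub m nn0 = m.
Proof. nnext; atoms i; lia. Qed.
Lemma nnsubnn k (m : NN k) : nnsub m m = nn0.
Proof. nnext; atoms i; lia. Qed.
Lemma nnaddKl k (a b : NN k) : nnsub (nnadd a b) a = b.
Proof. nnext; atoms i; lia. Qed.
Lemma nnsub_add2r k (a b p : NN k) : nnsub (nnadd b p) (nnadd a p) = nnsub b a.
Proof. nnext; atoms i; lia. Qed.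
Lemma nnadd_cancel k (a b c : NN k) : nnadd a b = nnadd a c -> b = c.
Proof. move=> H; nnext; have := congr1 (fun f : NN k => f i) H; rewrite /nn0 /nnadd ?ffunE; atoms i; lia. Qed.
Lemma nnadd_id0 k (a b : NN k) : nnadd a b = b -> a = nn0.
Proof. move=> H; nnext; have := congr1 (fun f : NN k => f i) H; rewrite /nn0 /nnadd ?ffunE; atoms i; lia. Qed.
Lemma nnaddsub k (m n : NN k) : nnle m n -> nnadd m (nnsub n m) = n.
Proof. move/nnleP=> H; nnext; have := H i; atoms i; lia. Qed.
Lemma nnle_refl k (m : NN k) : nnle m m.
Proof. by apply/nnleP. Qed.
Lemma nnle0 k (m : NN k) : nnle nn0 m.
Proof. by apply/nnleP => i; rewrite ffunE. Qed.
Lemma nnle_trans k (m n p : NN k) : nnle m n -> nnle n p -> nnle m p.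
Proof. move=> /nnleP H1 /nnleP H2; apply/nnleP => i; have := H1 i; have := H2 i; atoms i; lia. Qed.
Lemma nnle_addr k (m n : NN k) : nnle m (nnadd m n).
Proof. apply/nnleP => i; rewrite /nnadd /nnmax ?ffunE; atoms i; lia. Qed.
Lemma nnle_add2r k (a b p : NN k) : nnle (nnadd a p) (nnadd b p) = nnle a b.
Proof.
apply/nnleP/nnleP => H i; have := H i; rewrite /nnadd ?ffunE; atoms i; lia.
Qed.
Lemma nnsub_split k (a b c : NN k) : nnle a b -> nnle b c ->
  nnsub c a = nnadd (nnsub b a) (nnsub c b).
Proof. move=> /nnleP H1 /nnleP H2; nnext; have := H1 i; have := H2 i; atoms i; lia. Qed.
Lemma nnle_sub k (a b c : NN k) : nnle a b -> nnle b c -> nnle (nnsub b a) (nnsub c a).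
Proof. move=> /nnleP H1 /nnleP H2; apply/nnleP => i; rewrite !ffunE; have := H1 i; have := H2 i; atoms i; lia. Qed.

Lemma nnle_maxl k (m n : NN k) : nnle m (nnmax m n).
Proof. apply/nnleP => i; rewrite /nnadd /nnmax ?ffunE; atoms i; lia. Qed.
Lemma nnle_maxr k (m n : NN k) : nnle n (nnmax m n).
Proof. apply/nnleP => i; rewrite /nnadd /nnmax ?ffunE; atoms i; lia. Qed.

Definition EE k (n : nat) : NN k := [ffun _ => n].
Definition Nof k (b : NN k) : nat := \max_(i < k) b i.
Lemma le_EN k (b : NN k) : nnle b (EE k (Nof b)).
Proof. apply/nnleP => i; rewrite ffunE /Nof; exact: (leq_bigmax i). Qed.
Lemma EE_mono k n m : n <= m -> nnle (EE k n) (EE k m).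
Proof. move=> H; apply/nnleP => i; rewrite /nn0 /nnadd ?ffunE; atoms i; lia. Qed.

Definition zzpos l (m : NN l) : ZZ l := [ffun i => Posz (m i)].
Lemma zzneg0 l : zzneg (@nn0 l) = zz0.
Proof. apply/ffunP => i; rewrite !ffunE; by rewrite oppr0. Qed.
Lemma zznegD l (a b : NN l) : zzadd (zzneg a) (zzneg b) = zzneg (nnadd a b).
Proof. apply/ffunP => i; rewrite !ffunE PoszD opprD //. Qed.
Lemma zzposneg l (m : NN l) : zzadd (zzpos m) (zzneg m) = zz0.
Proof. apply/ffunP => i; rewrite !ffunE subrr //. Qed.
Lemma zzcancel l (m n : NN l) : zzadd (zzneg m) (zzadd (zzpos m) (zzneg n)) = zzneg n.
Proof. apply/ffunP => i; rewrite !ffunE addrA addNr add0r //. Qed.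

Lemma kd_kr k (L : kgraph k) (HK : is_kgraph L) (l : L) : kd (kr l) = nn0.
Proof.
case: HK => [Hrs [Hid [Hcrs [Has [Hdeg Hfac]]]]].
have [H1 _] := Hid l.
have := Hdeg (kr l) l; rewrite H1; have [_ [-> _]] := Hrs l.
by move=> /(_ erefl) /esym /nnadd_id0.
Qed.

Lemma kd_ks k (L : kgraph k) (HK : is_kgraph L) (l : L) : kd (ks l) = nn0.
Proof.
case: HK => [Hrs [Hid [Hcrs [Has [Hdeg Hfac]]]]].
have [_ H1] := Hid l.
have := Hdeg l (ks l); rewrite H1; have [_ [_ [-> _]]] := Hrs l.
by move=> /(_ erefl) /esym; rewrite nnaddC => /nnadd_id0.
Qed.

Lemma uniqU k (L : kgraph k) (HK : is_kgraph L) (m n m' n' : L) :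
  kcomp m n = kcomp m' n' -> ks m = kr n -> ks m' = kr n' -> kd m = kd m' ->
  m = m' /\ n = n'.
Proof.
move=> E c c' dm.
have HK' := HK.
case: HK' => [Hrs [Hid [Hcrs [Has [Hdeg Hfac]]]]].
have Hd := Hdeg m n c. have Hd' := Hdeg m' n' c'.
have [mu [nu [_ U]]] := Hfac (kcomp m n) (kd m) (kd n) Hd.
have [e1 e2] := U m n erefl erefl c erefl.
have dn : kd n' = kd n.
  by apply: (@nnadd_cancel _ (kd m)); rewrite -Hd dm -Hd' E.
have [e1' e2'] := U m' n' (esym dm) dn c' E.
by rewrite e1 e2 e1' e2'.
Qed.

Lemma vertex_r k (L : kgraph k) (HK : is_kgraph L) (v : L) : kd v = nn0 -> kr v = v.
Proof.
move=> dv; have HK' := HK; case: HK' => [Hrs [Hid [Hcrs [Has [Hdeg Hfac]]]]].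
have [H1 H2] := Hid v.
have [H3 [H4 [H5 H6]]] := Hrs v.
have [] := uniqU HK (m := kr v) (n := v) (m' := v) (n' := ks v);
  first [by rewrite H1 H2 | by rewrite H5 | by rewrite H4 | by rewrite dv kd_kr | by move=> ->].
Qed.

Lemma vertex_s k (L : kgraph k) (HK : is_kgraph L) (v : L) : kd v = nn0 -> ks v = v.
Proof.
move=> dv; have HK' := HK; case: HK' => [Hrs [Hid [Hcrs [Has [Hdeg Hfac]]]]].
have [H1 H2] := Hid v.
have [H3 [H4 [H5 H6]]] := Hrs v.
have [] := uniqU HK (m := kr v) (n := v) (m' := v) (n' := ks v);
  first [by rewrite H1 H2 | by rewrite H5 | by rewrite H4 | by rewrite dv kd_kr | by move=> _ <-].
Qed.

Definition fac k (L : kgraph k) (l : L) (m : NN k) : L * L :=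
  epsilon (inhabits (l, l))
    (fun p => kd p.1 = m /\ ks p.1 = kr p.2 /\ l = kcomp p.1 p.2).

Lemma facP k (L : kgraph k) (HK : is_kgraph L) (l : L) (m : NN k) :
  nnle m (kd l) ->
  kd (fac l m).1 = m /\ ks (fac l m).1 = kr (fac l m).2 /\ l = kcomp (fac l m).1 (fac l m).2.
Proof.
move=> H; rewrite /fac; apply: (epsilon_spec (inhabits (l,l)) (fun p : L * L => kd p.1 = m /\ ks p.1 = kr p.2 /\ l = kcomp p.1 p.2)).
have HK' := HK; case: HK' => [Hrs [Hid [Hcrs [Has [Hdeg Hfac]]]]].
have [mu [nu [[d1 [d2 [c e]]] _]]] := Hfac l m (nnsub (kd l) m) (esym (nnaddsub H)).
by exists (mu, nu).
Qed.

Definition seg k (L : kgraph k) (l : L) (a b : NN k) : L :=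
  (fac (fac l a).2 (nnsub b a)).1.

Lemma segP k (L : kgraph k) (HK : is_kgraph L) (l al si be : L) (a b : NN k) :
  ks al = kr si -> ks si = kr be -> kd al = a -> kd si = nnsub b a ->
  l = kcomp al (kcomp si be) -> seg l a b = si.
Proof.
move=> c1 c2 da ds E.
have HK' := HK; case: HK' => [Hrs [Hid [Hcrs [Has [Hdeg Hfac]]]]].
have [r1 _] := Hcrs si be c2.
have c1' : ks al = kr (kcomp si be) by rewrite r1.
have dl : kd l = nnadd a (kd (kcomp si be)) by rewrite E Hdeg // da.
have hle : nnle a (kd l) by rewrite dl nnle_addr.
have [f1 [f2 f3]] := facP HK hle.
have [e1 e2] := uniqU HK (m := (fac l a).1) (n := (fac l a).2) (m' := al) (n' := kcomp si be)
  (etrans (esym f3) E) f2 c1' (etrans f1 (esym da)).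
rewrite /seg e2.
have ds' : kd (kcomp si be) = nnadd (nnsub b a) (kd be) by rewrite Hdeg // ds.
have hle2 : nnle (nnsub b a) (kd (kcomp si be)) by rewrite ds' nnle_addr.
have [g1 [g2 g3]] := facP HK hle2.
have [] := uniqU HK (esym g3) g2 c2 (etrans g1 (esym ds)) => //.
Qed.

Lemma facP2 k (L : kgraph k) (HK : is_kgraph L) (l : L) (m : NN k) :
  nnle m (kd l) -> kd (fac l m).2 = nnsub (kd l) m.
Proof.
move=> H; have [f1 [f2 f3]] := facP HK H.
have HK' := HK; case: HK' => [Hrs [Hid [Hcrs [Has [Hdeg Hfac]]]]].
by rewrite {2}f3 Hdeg // f1 nnaddKl.
Qed.

Lemma seg_vert k (L : kgraph k) (HK : is_kgraph L) (l al X : L) (a : NN k) :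
  ks al = kr X -> kd al = a -> l = kcomp al X -> seg l a a = kr X.
Proof.
move=> c da E.
have HK' := HK; case: HK' => [Hrs [Hid [Hcrs [Has [Hdeg Hfac]]]]].
have [h1 [h2 _]] := Hrs X. have [i1 _] := Hid X.
apply: (segP HK (al := al) (be := X)) => //.
- by rewrite h1.
- by rewrite kd_kr // nnsubnn.
- by rewrite i1.
Qed.

Lemma decomp3 k (L : kgraph k) (HK : is_kgraph L) (l : L) (a b c : NN k) :
  nnle a b -> nnle b c -> nnle c (kd l) ->
  exists al s1 s2 be : L, ks al = kr s1 /\ ks s1 = kr s2 /\ ks s2 = kr be /\
    kd al = a /\ kd s1 = nnsub b a /\ kd s2 = nnsub c b /\
    l = kcomp al (kcomp s1 (kcomp s2 be)).
Proof.
move=> hab hbc hcl.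
have HK' := HK; case: HK' => [Hrs [Hid [Hcrs [Has [Hdeg Hfac]]]]].
have hal : nnle a (kd l) by apply: nnle_trans hab (nnle_trans hbc hcl).
have [f1 [f2 f3]] := facP HK hal. have f4 := facP2 HK hal.
set p1 := (fac l a).1 in f1 f2 f3 f4 *. set p2 := (fac l a).2 in f1 f2 f3 f4 *.
have h2 : nnle (nnsub b a) (kd p2).
  by rewrite f4; apply: nnle_sub => //; apply: nnle_trans hbc hcl.
have [g1 [g2 g3]] := facP HK h2. have g4 := facP2 HK h2.
set q1 := (fac p2 _).1 in g1 g2 g3 g4 *. set q2 := (fac p2 _).2 in g1 g2 g3 g4 *.
have h3 : nnle (nnsub c b) (kd q2).
  rewrite g4 f4; move: hab hbc hcl => /nnleP H1 /nnleP H2 /nnleP H3.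
  apply/nnleP => i; have := H1 i; have := H2 i; have := H3 i.
  rewrite /nnsub !ffunE; atoms i; lia.
have [r1' [r2' r3']] := facP HK h3.
set t1 := (fac q2 _).1 in r1' r2' r3' *. set t2 := (fac q2 _).2 in r1' r2' r3' *.
exists p1, q1, t1, t2; split; last split; last split; last split; last split; last split.
- rewrite f2 g3; by have [-> _] := Hcrs q1 q2 g2.
- rewrite g2 r3'; by have [-> _] := Hcrs t1 t2 r2'.
- exact: r2'.
- exact: f1.
- exact: g1.
- exact: r1'.
- by rewrite -r3' -g3.
Qed.

Lemma seg_props k (L : kgraph k) (HK : is_kgraph L) (l : L) (a b c : NN k) :
  nnle a b -> nnle b c -> nnle c (kd l) ->
  kd (seg l a b) = nnsub b a /\ kr (seg l a b) = seg l a a /\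
  ks (seg l a b) = seg l b b /\ seg l a c = kcomp (seg l a b) (seg l b c).
Proof.
move=> hab hbc hcl.
have HK' := HK; case: HK' => [Hrs [Hid [Hcrs [Has [Hdeg Hfac]]]]].
have [al [s1 [s2 [be [c1 [c2 [c3 [d1 [d2 [d3 E]]]]]]]]]] := decomp3 HK hab hbc hcl.
have [k1 k2] := Hcrs s2 be c3.
have c2' : ks s1 = kr (kcomp s2 be) by rewrite k1.
have [m1 m2] := Hcrs s1 (kcomp s2 be) c2'.
have c1' : ks al = kr (kcomp s1 (kcomp s2 be)) by rewrite m1.
have [n1 n2] := Hcrs al s1 c1.
have [o1 o2] := Hcrs s1 s2 c2.
have E2 : l = kcomp (kcomp al s1) (kcomp s2 be) by rewrite Has.
have dA : kd (kcomp al s1) = b by rewrite Hdeg // d1 d2 nnaddsub.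
have eab : seg l a b = s1 by apply: (segP HK (al := al) (be := kcomp s2 be)).
have ebc : seg l b c = s2.
  by apply: (segP HK (al := kcomp al s1) (be := be)) => //; rewrite n2.
have eac : seg l a c = kcomp s1 s2.
  apply: (segP HK (al := al) (be := be)) => //.
  - by rewrite o1.
  - by rewrite o2.
  - by rewrite Hdeg // d2 d3 -nnsub_split.
  - by rewrite Has.
have eaa : seg l a a = kr s1.
  by rewrite (seg_vert HK (al := al) (X := kcomp s1 (kcomp s2 be))) // m1.
have ebb : seg l b b = kr s2.
  by rewrite (seg_vert HK (al := kcomp al s1) (X := kcomp s2 be)) // ?k1 // n2.
rewrite eab ebc eac eaa ebb; do !split => //.
Qed.

Lemma segext k (L : kgraph k) (HK : is_kgraph L) (l t : L) (a b : NN k) :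
  nnle a b -> nnle b (kd l) -> ks l = kr t -> seg (kcomp l t) a b = seg l a b.
Proof.
move=> hab hbl ct.
have HK' := HK; case: HK' => [Hrs [Hid [Hcrs [Has [Hdeg Hfac]]]]].
have [al [s1 [s2 [be [c1 [c2 [c3 [d1 [d2 [d3 E]]]]]]]]]] := decomp3 HK hab (nnle_refl b) hbl.
set R := kcomp s2 be in E.
have [k1 k2] := Hcrs s2 be c3.
have c2' : ks s1 = kr R by rewrite k1.
have [m1 m2] := Hcrs s1 R c2'.
have c1' : ks al = kr (kcomp s1 R) by rewrite m1.
have [n1 n2] := Hcrs al (kcomp s1 R) c1'.
have e1 : seg l a b = s1 by apply: (segP HK (al := al) (be := R)).
have cRt : ks R = kr t by rewrite -ct E n2 m2.
rewrite e1; apply: (segP HK (al := al) (be := kcomp R t)) => //.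
- by have [-> _] := Hcrs R t cRt.
- rewrite E Has //; last by rewrite m2.
  by rewrite Has.
Qed.

Lemma chain_path k (L : kgraph k) (HK : is_kgraph L) (f h : nat -> L) :
  (forall n, ks (f n) = kr (h n)) -> (forall n, f n.+1 = kcomp (f n) (h n)) ->
  (forall n, nnle (EE k n) (kd (f n))) ->
  exists x, is_inf_path x /\
    forall n a b, nnle a b -> nnle b (kd (f n)) -> x a b = seg (f n) a b.
Proof.
move=> cfh Ef Df.
have HK' := HK; case: HK' => [Hrs [Hid [Hcrs [Has [Hdeg Hfac]]]]].
have ext : forall n d, exists t, ks (f n) = kr t /\ f (n + d) = kcomp (f n) t.
  move=> n; elim=> [|d [t [ct Et]]].
  - exists (ks (f n)); have [_ [_ [-> _]]] := Hrs (f n); split => //.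
    by rewrite addn0; have [_ ->] := Hid (f n).
  - have ctt : ks t = kr (h (n + d)) by rewrite -cfh Et; have [_ ->] := Hcrs (f n) t ct.
    exists (kcomp t (h (n + d))); split.
    + by have [-> _] := Hcrs t (h (n + d)) ctt.
    + by rewrite addnS Ef Et Has.
have bnd : forall b, nnle b (kd (f (Nof b))).
  move=> b; exact: nnle_trans (le_EN b) (Df _).
pose x a b := if nnle a b then seg (f (Nof b)) a b else seg (f (Nof a)) a a.
have key : forall n a b, nnle a b -> nnle b (kd (f n)) -> x a b = seg (f n) a b.
  move=> n a b hab hbn; rewrite /x hab.
  have [t [ct Et]] := ext n (Nof b - n).
  have [t' [ct' Et']] := ext (Nof b) (n - Nof b).
  have e1 : n + (Nof b - n) = Nof b + (n - Nof b) by lia.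
  rewrite -(segext HK hab hbn ct) -Et e1 Et' segext //.
exists x; split; last exact: key.
split; last split.
- move=> a b hab.
  have [p1 [p2 [p3 _]]] := seg_props HK hab (nnle_refl b) (bnd b).
  rewrite (key (Nof b) a b) // p1 p2 p3; split => //.
  by rewrite (key (Nof b) a a) ?nnle_refl ?(key (Nof b) b b) ?nnle_refl //;
    apply: nnle_trans hab (bnd b).
- move=> a b c hab hbc.
  have hcl := bnd c.
  have [_ [_ [_ p4]]] := seg_props HK hab hbc hcl.
  have hbl : nnle b (kd (f (Nof c))) by apply: nnle_trans hbc hcl.
  have hac := nnle_trans hab hbc.
  by rewrite (key (Nof c) a c) // (key (Nof c) a b) // (key (Nof c) b c).
- by move=> a b /negbTE hab; rewrite /x hab nnle_refl.
Qed.

Lemma EE_add k n : nnadd (EE k n) (EE k 1) = EE k n.+1.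
Proof. nnext; rewrite /EE ?ffunE; lia. Qed.

Lemma exists_path k (L : kgraph k) (HK : is_kgraph L) :
  locally_finite_no_sources_sinks L ->
  forall v : L, is_vertex v -> exists y, is_inf_path y /\ y nn0 nn0 = v.
Proof.
move=> LF v vv.
have HK' := HK; case: HK' => [Hrs [Hid [Hcrs [Has [Hdeg Hfac]]]]].
pose g (u : L) := epsilon (inhabits u) (fun l => kr l = u /\ kd l = EE k 1).
have gP : forall u : L, is_vertex u -> kr (g u) = u /\ kd (g u) = EE k 1.
  move=> u vu; rewrite /g.
  apply: (epsilon_spec (inhabits u) (fun l : L => kr l = u /\ kd l = EE k 1)).
  by have [_ [_ [[l' [h1 h2]] _]]] := LF (EE k 1) u vu; exists l'.
pose f := fix F n := match n with 0 => v | n'.+1 => kcomp (F n') (g (ks (F n'))) end.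
have cf : forall n, ks (f n) = kr (g (ks (f n))).
  by move=> n; have [-> _] := gP (ks (f n)) (kd_ks HK _).
have df : forall n, kd (f n) = EE k n.
  elim=> [|n IH] /=; first by rewrite vv; nnext; rewrite /EE ?ffunE.
  rewrite Hdeg; last exact: cf.
  by have [_ ->] := gP (ks (f n)) (kd_ks HK _); rewrite IH EE_add.
have [y [Py Ky]] := chain_path HK (f := f) (h := fun n => g (ks (f n))) cf (fun n => erefl)
  (fun n => eq_ind_r (fun t => nnle (EE k n) t) (nnle_refl _) (df n)).
exists y; split => //.
rewrite (Ky 0) ?nnle_refl ?nnle0 //=.
have [i1 _] := Hid v.
rewrite (seg_vert HK (al := kr v) (X := v)) ?vertex_r //.
- exact: vertex_s.
- by rewrite vertex_r // in i1; rewrite i1.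
Qed.

Lemma path_shift_alpha k (L : kgraph k) (HK : is_kgraph L) (phi : L -> L) (p : NN k) y :
  kg_aut phi -> is_inf_path y ->
  is_inf_path (fun a b => phi (y (nnadd a p) (nnadd b p))).
Proof.
move=> [_ [Pd Pc]] [P1 [P2 P3]]; split; last split.
- move=> a b hab; rewrite -(nnle_add2r _ _ p) in hab.
  have [d1 [d2 d3]] := P1 _ _ hab; have [e1 [e2 e3]] := Pd (y (nnadd a p) (nnadd b p)).
  by rewrite e1 e2 e3 d1 d2 d3 nnsub_add2r.
- move=> a b c hab hbc; rewrite -(nnle_add2r _ _ p) in hab; rewrite -(nnle_add2r _ _ p) in hbc.
  rewrite (P2 _ _ _ hab hbc) Pc //.
  by have [_ [_ ->]] := P1 _ _ hab; have [_ [-> _]] := P1 _ _ hbc.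
- by move=> a b hab; rewrite P3 // nnle_add2r.
Qed.

Lemma concat_path k (L : kgraph k) (HK : is_kgraph L) (mu : L) z :
  is_inf_path z -> z nn0 nn0 = ks mu ->
  exists w, is_inf_path w /\ w nn0 (kd mu) = mu /\
    forall a b, w (nnadd a (kd mu)) (nnadd b (kd mu)) = z a b.
Proof.
move=> [P1 [P2 P3]] z0.
have HK' := HK; case: HK' => [Hrs [Hid [Hcrs [Has [Hdeg Hfac]]]]].
pose f n := kcomp mu (z nn0 (EE k n)).
pose h n := z (EE k n) (EE k n.+1).
have c0 : forall n, ks mu = kr (z nn0 (EE k n)).
  by move=> n; have [_ [-> _]] := P1 _ _ (nnle0 (EE k n)).
have cf : forall n, ks (f n) = kr (h n).
  move=> n; rewrite /f /h; have [_ ->] := Hcrs _ _ (c0 n).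
  have [_ [_ ->]] := P1 _ _ (nnle0 (EE k n)).
  by have [_ [-> _]] := P1 _ _ (EE_mono k (leqnSn n)).
have Ef : forall n, f n.+1 = kcomp (f n) (h n).
  move=> n; rewrite /f /h (P2 _ (EE k n)) ?nnle0 ?EE_mono // Has //.
  by have [_ [_ ->]] := P1 _ _ (nnle0 (EE k n)); have [_ [-> _]] := P1 _ _ (EE_mono k (leqnSn n)).
have df : forall n, kd (f n) = nnadd (kd mu) (EE k n).
  by move=> n; rewrite /f Hdeg // (proj1 (P1 _ _ (nnle0 _))) nnsub0.
have Df : forall n, nnle (EE k n) (kd (f n)).
  by move=> n; rewrite df nnaddC nnle_addr.
have [w [Pw Kw]] := chain_path HK cf Ef Df.
have main : forall a b, nnle a b -> w (nnadd a (kd mu)) (nnadd b (kd mu)) = z a b.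
  move=> a b hab.
  set n := Nof b.
  have hbn := le_EN b.
  have hbn' : nnle (nnadd b (kd mu)) (kd (f n)) by rewrite df (nnaddC (kd mu)) nnle_add2r.
  rewrite (Kw n) ?nnle_add2r //.
  have [a1 [a2 a3]] := P1 _ _ (nnle0 a).
  have [b1 [b2 b3]] := P1 _ _ hab.
  have [e1 [e2 e3]] := P1 _ _ hbn.
  have ca : ks mu = kr (z nn0 a) by rewrite a2.
  apply: (segP HK (al := kcomp mu (z nn0 a)) (be := z b (EE k n))).
  - by have [_ ->] := Hcrs _ _ ca; rewrite a3 b2.
  - by rewrite b3 e2.
  - by rewrite Hdeg // a1 nnsub0 nnaddC.
  - by rewrite b1 nnsub_add2r.
  - rewrite /f (P2 nn0 a (EE k n)) ?nnle0 ?(nnle_trans hab hbn) //.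
    rewrite (P2 a b (EE k n)) // -Has //.
    have [-> _] := Hcrs _ _ (etrans b3 (esym e2)).
    by rewrite a3 b2.
exists w; split => //; split.
- rewrite (Kw 0) ?nnle0 ?df ?nnle_addr //.
  apply: (segP HK (al := kr mu) (be := z nn0 (EE k 0))).
  + by have [_ [-> _]] := Hrs mu.
  + exact: c0.
  + exact: kd_kr.
  + by rewrite nnsub0.
  + rewrite -Has; [by have [-> _] := Hid mu | by have [_ [-> _]] := Hrs mu | exact: c0].
- move=> a b; case hab: (nnle a b); first exact: main.
  have [_ [_ Q3]] := Pw.
  rewrite Q3 ?nnle_add2r ?hab // main ?nnle_refl //.
  by rewrite P3 // hab.
Qed.

Lemma aneg_comp k l (L : kgraph k) (alpha : ZZ l -> L -> L) (HA : is_aut_action alpha) a b (u : L) :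
  alpha (zzneg a) (alpha (zzneg b) u) = alpha (zzneg (nnadd a b)) u.
Proof. by case: HA => [_ [_ H3]]; rewrite -H3 zznegD. Qed.

Lemma apos_neg k l (L : kgraph k) (alpha : ZZ l -> L -> L) (HA : is_aut_action alpha) m (u : L) :
  alpha (zzpos m) (alpha (zzneg m) u) = u.
Proof. by case: HA => [_ [H2 H3]]; rewrite -H3 zzposneg H2. Qed.

Lemma acancel k l (L : kgraph k) (alpha : ZZ l -> L -> L) (HA : is_aut_action alpha) m n (u : L) :
  alpha (zzneg m) (alpha (zzadd (zzpos m) (zzneg n)) u) = alpha (zzneg n) u.
Proof. by case: HA => [_ [H2 H3]]; rewrite -H3 zzcancel. Qed.

Lemma HN_lemma k (L : kgraph k) (ls : seq L) :
  forall lam, lam \in ls -> nnle (kd lam) (foldr (fun lam acc => nnmax (kd lam) acc) nn0 ls).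
Proof.
elim: ls => // a s IH lam; rewrite inE => /orP [/eqP -> | H] /=.
- exact: nnle_maxl.
- exact: nnle_trans (IH _ H) (nnle_maxr _ _).
Qed.

Theorem lemma5p7 (k l : nat) (L : kgraph k) (alpha : ZZ l -> L -> L) :
  is_kgraph L -> locally_finite_no_sources_sinks L -> is_aut_action alpha ->
  (alpha_cofinal alpha <-> tau_irreducible alpha).
Proof.
move=> HK LF HA.
have HK' := HK; case: HK' => [Hrs [Hid [Hcrs [Has [Hdeg Hfac]]]]].
have Aut : forall z, kg_aut (alpha z) by case: HA.
have AutP : forall z (u : L), kd (alpha z u) = kd u /\ kr (alpha z u) = alpha z (kr u) /\
   ks (alpha z u) = alpha z (ks u).
  by move=> z u; have [_ [H _]] := Aut z; exact: H.
have A0 : forall u : L, alpha zz0 u = u by case: HA => [_ [H _]].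
split.
- move=> Hcof W Wopen Winv.
  case: (classic (exists x, is_inf_path x /\ W x)) => [[x [Px Wx]] | Hn]; last first.
    by left => x Px Wx; apply: Hn; exists x.
  right => y Py.
  have [ls [Hls Wcyl]] := Wopen x Px Wx.
  set N := foldr (fun lam acc => nnmax (kd lam) acc) nn0 ls.
  have HN := @HN_lemma k L ls.
  have [X1 [X2 X3]] := Px.
  have cyl : forall w, is_inf_path w -> w nn0 N = x nn0 N -> W w.
    move=> w Pw E; apply: (Wcyl w Pw) => lam Hl; rewrite /in_cyl.
    have hd := HN lam Hl. have := Hls lam Hl; rewrite /in_cyl => Ex.
    have [W1 [W2 W3]] := Pw.
    have [u1 [u2 u3]] := W1 _ _ (nnle0 (kd lam)).
    have [t1 [t2 t3]] := W1 _ _ hd.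
    have [u1' [u2' u3']] := X1 _ _ (nnle0 (kd lam)).
    have [t1' [t2' t3']] := X1 _ _ hd.
    have q1 : kcomp (w nn0 (kd lam)) (w (kd lam) N) = kcomp (x nn0 (kd lam)) (x (kd lam) N).
      by rewrite -W2 ?nnle0 // -X2 ?nnle0.
    have q2 : ks (w nn0 (kd lam)) = kr (w (kd lam) N) by rewrite u3 t2.
    have q3 : ks (x nn0 (kd lam)) = kr (x (kd lam) N) by rewrite u3' t2'.
    have q4 : kd (w nn0 (kd lam)) = kd (x nn0 (kd lam)) by rewrite u1 u1'.
    have [e _] := uniqU HK q1 q2 q3 q4.
    by rewrite e.
  have hN := nnle_refl N.
  have [v1 [v2 v3]] := X1 _ _ hN.
  have vv : is_vertex (x N N) by rewrite /is_vertex v1 nnsubnn.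
  have [p [m [n [lam [r1 s1]]]]] := Hcof (x N N) y vv Py.
  set mu := alpha (zzpos m) lam.
  set Z := zzadd (zzpos m) (zzneg n).
  have rmu : kr mu = x N N.
    by have [_ [-> _]] := AutP (zzpos m) lam; rewrite r1 (apos_neg HA).
  have smu : ks mu = alpha Z (y p p).
    have [_ [_ ->]] := AutP (zzpos m) lam; rewrite s1.
    by case: HA => [_ [_ H3]]; rewrite -H3.
  have [k1 [k2 k3]] := X1 _ _ (nnle0 N).
  set ka := x nn0 N.
  have cka : ks ka = kr mu by rewrite k3 rmu.
  set ka' := kcomp ka mu.
  have Pz := path_shift_alpha HK p (Aut Z) Py.
  set z' := (fun a b => alpha Z (y (nnadd a p) (nnadd b p))) in Pz.
  have z0 : z' nn0 nn0 = ks ka'.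
    by rewrite /z' /ka'; have [_ ->] := Hcrs _ _ cka; rewrite smu nn0add.
  have [w [Pw [w0 wsh]]] := concat_path HK Pz z0.
  have Ww : W w.
    apply: cyl => //.
    have [W1 [W2 W3]] := Pw.
    have dka' : kd ka' = nnadd N (kd mu) by rewrite /ka' Hdeg // k1 nnsub0.
    have hle : nnle N (kd ka') by rewrite dka' nnle_addr.
    have [b1 [b2 b3]] := W1 _ _ (nnle0 N).
    have [c1 [c2 c3]] := W1 _ _ hle.
    have q1 : kcomp (w nn0 N) (w N (kd ka')) = kcomp ka mu by rewrite -W2 ?nnle0.
    have q2 : ks (w nn0 N) = kr (w N (kd ka')) by rewrite b3 c2.
    have q4 : kd (w nn0 N) = kd ka by rewrite b1 k1.
    have [e _] := uniqU HK q1 q2 cka q4.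
    exact: e.
  apply: (Winv w y Pw Py Ww).
  exists (kd ka'), p, m, n.
  apply: functional_extensionality => a; apply: functional_extensionality => b.
  rewrite /tau /shift /alpha_inf wsh /z'.
  exact: (acancel HA).
- move=> Hirr v x vv Px.
  pose W (y : NN k -> NN k -> L) := exists p m n (lam : L),
    kr lam = alpha (zzneg m) v /\ ks lam = alpha (zzneg n) (y p p).
  have Wo : is_open_path_set W.
    move=> y Py [p [m [n [lam [r1 s1]]]]]; exists [:: y nn0 p].
    have [Y1 _] := Py.
    have [d1 [d2 d3]] := Y1 _ _ (nnle0 p).
    rewrite nnsub0 in d1.
    split.
    + by move=> lam'; rewrite inE => /eqP ->; rewrite /in_cyl d1.
    + move=> y' Py' H; have := H (y nn0 p) (mem_head _ _); rewrite /in_cyl d1 => E.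
      have [Y1' _] := Py'.
      have [_ [_ d3']] := Y1' _ _ (nnle0 p).
      exists p, m, n, lam; split => //; by rewrite s1 -d3 -E d3'.
  have Wi : is_invariant alpha W.
    move=> y y' Py Py' [p [m [n [lam [r1 s1]]]]] [q [q' [n1 [n2 E]]]].
    have Ep : alpha (zzneg n1) (y (nnadd p q) (nnadd p q)) =
              alpha (zzneg n2) (y' (nnadd p q') (nnadd p q')) := congr1 (fun F => F p p) E.
    have [Y1 _] := Py.
    have hpq : nnle p (nnadd p q) by exact: nnle_addr.
    have [d1 [d2 d3]] := Y1 _ _ hpq.
    set sg := alpha (zzneg n) (y p (nnadd p q)).
    have csg : ks lam = kr sg by rewrite s1 /sg; have [_ [-> _]] := AutP (zzneg n) (y p (nnadd p q)); rewrite d2.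
    have [l1 l2] := Hcrs _ _ csg.
    exists (nnadd p q'), (nnadd n1 m), (nnadd n n2), (alpha (zzneg n1) (kcomp lam sg)).
    split.
    + have [_ [-> _]] := AutP (zzneg n1) (kcomp lam sg).
      by rewrite l1 r1 (aneg_comp HA).
    + have [_ [_ ->]] := AutP (zzneg n1) (kcomp lam sg).
      rewrite l2 /sg; have [_ [_ ->]] := AutP (zzneg n) (y p (nnadd p q)).
      rewrite d3 (aneg_comp HA) nnaddC -(aneg_comp HA) Ep (aneg_comp HA) //.
  case: (Hirr W Wo Wi) => [Hno | Hall]; last exact: Hall x Px.
  exfalso.
  have [y [Py y0]] := exists_path HK LF vv.
  apply: (Hno y Py).
  exists nn0, nn0, nn0, v; rewrite zzneg0 !A0 vertex_r // vertex_s //.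
Qed.
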